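(* In the algebra $\mathcal O_q$ defined in the context, the element $\tilde{\mathcal G}_1+qB_\delta$ is central, where $B_\delta=q^{-2}\mathcal W_1\mathcal W_0-\mathcal W_0\mathcal W_1$.
   Context: All algebras are associative and unital over a field $\mathbb F$; $q\in\mathbb F$ is nonzero and not a root of unity. For elements $X,Y$ of an algebra, $[X,Y]=XY-YX$ and $[X,Y]_q=qXY-q^{-1}YX$. Let $\rho=-(q^2-q^{-2})^2$. The algebra $\mathcal O_q$ is defined by generators $\mathcal W_{-k},\mathcal W_{k+1},\mathcal G_{k+1},\tilde{\mathcal G}_{k+1}$ ($k\in\mathbb N$) and the following relations for all $k,\ell\in\mathbb N$: $[\mathcal W_0,\mathcal W_{k+1}]=[\mathcal W_{-k},\mathcal W_1]=(\tilde{\mathcal G}_{k+1}-\mathcal G_{k+1})/(q+q^{-1})$; $[\mathcal W_0,\mathcal G_{k+1}]_q=[\tilde{\mathcal G}_{k+1},\mathcal W_0]_q=\rho\mathcal W_{-k-1}-\rho\mathcal W_{k+1}$; $[\mathcal G_{k+1},\mathcal W_1]_q=[\mathcal W_1,\tilde{\mathcal G}_{k+1}]_q=\rho\mathcal W_{k+2}-\rho\mathcal W_{-k}$; $[\mathcal W_{-k},\mathcal W_{-\ell}]=0$, $[\mathcal W_{k+1},\mathcal W_{\ell+1}]=0$; $[\mathcal W_{-k},\mathcal W_{\ell+1}]+[\mathcal W_{k+1},\mathcal W_{-\ell}]=0$; $[\mathcal W_{-k},\mathcal G_{\ell+1}]+[\mathcal G_{k+1},\mathcal W_{-\ell}]=0$;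 $[\mathcal W_{-k},\tilde{\mathcal G}_{\ell+1}]+[\tilde{\mathcal G}_{k+1},\mathcal W_{-\ell}]=0$; $[\mathcal W_{k+1},\mathcal G_{\ell+1}]+[\mathcal G_{k+1},\mathcal W_{\ell+1}]=0$; $[\mathcal W_{k+1},\tilde{\mathcal G}_{\ell+1}]+[\tilde{\mathcal G}_{k+1},\mathcal W_{\ell+1}]=0$; $[\mathcal G_{k+1},\mathcal G_{\ell+1}]=0$, $[\tilde{\mathcal G}_{k+1},\tilde{\mathcal G}_{\ell+1}]=0$; $[\tilde{\mathcal G}_{k+1},\mathcal G_{\ell+1}]+[\mathcal G_{k+1},\tilde{\mathcal G}_{\ell+1}]=0$. *)

(* Defs.v *)
From HB Require Import structures.
From mathcomp Require Import all_boot all_order all_algebra.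
Set Implicit Arguments. Unset Strict Implicit. Unset Printing Implicit Defensive.
Import GRing.Theory.
Local Open Scope ring_scope.

Definition comm (F : fieldType) (A : algType F) (X Y : A) : A := X * Y - Y * X.
Definition qcomm (F : fieldType) (A : algType F) (q : F) (X Y : A) : A :=
  q *: (X * Y) - q^-1 *: (Y * X).

Definition rho (F : fieldType) (q : F) : F := - (q ^+ 2 - q ^- 2) ^+ 2.

(* Indexing convention: Wm k = W_{-k}, Wp k = W_{k+1},
   G k = G_{k+1}, Gt k = \tilde G_{k+1}  (k : nat). *)
Definition Oq_relations (F : fieldType) (q : F) (A : algType F)
    (Wm Wp G Gt : nat -> A) : Prop :=
  let r := rho q in
  let c := (q + q^-1)^-1 in
  (forall k, comm (Wm 0%N) (Wp k) = c *: (Gt k - G k)) /\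
  (forall k, comm (Wm k) (Wp 0%N) = c *: (Gt k - G k)) /\
  (forall k, qcomm q (Wm 0%N) (G k) = r *: Wm k.+1 - r *: Wp k) /\
  (forall k, qcomm q (Gt k) (Wm 0%N) = r *: Wm k.+1 - r *: Wp k) /\
  (forall k, qcomm q (G k) (Wp 0%N) = r *: Wp k.+1 - r *: Wm k) /\
  (forall k, qcomm q (Wp 0%N) (Gt k) = r *: Wp k.+1 - r *: Wm k) /\
  (forall k l, comm (Wm k) (Wm l) = 0) /\
  (forall k l, comm (Wp k) (Wp l) = 0) /\
  (forall k l, comm (Wm k) (Wp l) + comm (Wp k) (Wm l) = 0) /\
  (forall k l, comm (Wm k) (G l) + comm (G k) (Wm l) = 0) /\
  (forall k l, comm (Wm k) (Gt l) + comm (Gt k) (Wm l) = 0) /\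
  (forall k l, comm (Wp k) (G l) + comm (G k) (Wp l) = 0) /\
  (forall k l, comm (Wp k) (Gt l) + comm (Gt k) (Wp l) = 0) /\
  (forall k l, comm (G k) (G l) = 0) /\
  (forall k l, comm (Gt k) (Gt l) = 0) /\
  (forall k l, comm (Gt k) (G l) + comm (G k) (Gt l) = 0).

Inductive gen_by (F : fieldType) (A : algType F) (Wm Wp G Gt : nat -> A)
  : A -> Prop :=
  | gen_Wm k : gen_by Wm Wp G Gt (Wm k)
  | gen_Wp k : gen_by Wm Wp G Gt (Wp k)
  | gen_G k : gen_by Wm Wp G Gt (G k)
  | gen_Gt k : gen_by Wm Wp G Gt (Gt k)
  | gen_one : gen_by Wm Wp G Gt 1
  | gen_scale (c : F) x : gen_by Wm Wp G Gt x -> gen_by Wm Wp G Gt (c *: x)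
  | gen_add x y : gen_by Wm Wp G Gt x -> gen_by Wm Wp G Gt y ->
                  gen_by Wm Wp G Gt (x + y)
  | gen_mul x y : gen_by Wm Wp G Gt x -> gen_by Wm Wp G Gt y ->
                  gen_by Wm Wp G Gt (x * y).

Definition Bdelta (F : fieldType) (q : F) (A : algType F) (Wm Wp : nat -> A) : A :=
  q ^- 2 *: (Wp 0%N * Wm 0%N) - Wm 0%N * Wp 0%N.

(* Main.v *)
Require Import Defs.
From HB Require Import structures.
From mathcomp Require Import all_boot all_order all_algebra.
From mathcomp Require Import ring.
Import GRing.Theory.
Local Open Scope ring_scope.

Section LC.
Variables (F : fieldType) (V : lmodType F).
Definition lc (vs : seq V) (c : nat -> F) : V := \sum_(i < size vs) c i *: vs`_i.
Lemma lcD vs c d : lc vs c + lc vs d = lc vs (fun i => c i + d i).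
Proof. by rewrite /lc -big_split /=; apply: eq_bigr => i _; rewrite scalerDl. Qed.
Lemma lcN vs c : - lc vs c = lc vs (fun i => - c i).
Proof. by rewrite /lc -sumrN; apply: eq_bigr => i _; rewrite scaleNr. Qed.
Lemma lcZ vs s c : s *: lc vs c = lc vs (fun i => s * c i).
Proof. by rewrite /lc scaler_sumr; apply: eq_bigr => i _; rewrite scalerA. Qed.
Lemma lc_eqn vs n c d : size vs = n -> (forall i, (i < n)%N -> c i = d i) ->
  lc vs c = lc vs d.
Proof. by move=> <- H; apply: eq_bigr => i _; rewrite H. Qed.
Lemma lcE vs i : (i < size vs)%N -> vs`_i = lc vs (fun j => if j == i then 1 else 0).
Proof.
move=> H; rewrite /lc (bigD1 (Ordinal H)) //= eqxx scale1r big1 ?addr0 //.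
move=> j /negbTE; rewrite -val_eqE /= => ->; by rewrite scale0r.
Qed.
End LC.
Arguments lc {F V}.
Arguments lcE {F V}.
Arguments lc_eqn {F V}.

Lemma scaleMl (F : fieldType) (A : algType F) (k : F) (x y : A) : k *: x * y = k *: (x * y).
Proof. by rewrite scalerAl. Qed.
Lemma scaleMr (F : fieldType) (A : algType F) (k : F) (x y : A) : x * (k *: y) = k *: (x * y).
Proof. by rewrite scalerAr. Qed.

Ltac len l := lazymatch l with nil => constr:(0%N) | cons _ ?l' => let n := len l' in constr:(S n) end.

Ltac lc_subst vs l i :=
  lazymatch l with
  | nil => idtac
  | cons ?a ?l' =>
      let E := fresh "E" in
      have E : a = lc vs (fun j => if j == i then 1 else 0) := lcE vs i erefl;
      rewrite ?E; clear E; lc_subst vs l' (S i)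
  end.

Ltac lc_norm :=
  rewrite /comm /qcomm /Bdelta;
  rewrite !(mulrDl, mulrDr, mulrBl, mulrBr, scaleMl, scaleMr, mulrA, scalerDr, scalerBr,
            scalerN, mulrN, mulNr, opprD, opprK).

Ltac lc_cases n tac :=
  lazymatch n with
  | O => let i := fresh "i" in let H := fresh "H" in move=> i H; by rewrite ltn0 in H
  | S ?m => let i := fresh "i" in let H := fresh "H" in
      move=> i H; case: i H => [|i] H; [ clear H; simpl; tac | rewrite ltnS in H; move: i H; lc_cases m tac ]
  end.

Ltac lc_solve l tac :=
  lc_norm;
  let vs := fresh "vs" in pose vs := l;
  lc_subst vs l 0%N;
  rewrite !(lcZ, lcN, lcD);
  let n := len l in
  apply: (lc_eqn vs n _ _ erefl);
  lc_cases n tac.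

Ltac fld := field; repeat (apply/andP; split); assumption.

Section Closure.
Variables (F : fieldType) (A : algType F) (Z : A).
Lemma cD a b : Z * a = a * Z -> Z * b = b * Z -> Z * (a + b) = (a + b) * Z.
Proof. by move=> ha hb; rewrite mulrDr mulrDl ha hb. Qed.
Lemma cB a b : Z * a = a * Z -> Z * b = b * Z -> Z * (a - b) = (a - b) * Z.
Proof. by move=> ha hb; rewrite mulrBr mulrBl ha hb. Qed.
Lemma cM a b : Z * a = a * Z -> Z * b = b * Z -> Z * (a * b) = (a * b) * Z.
Proof. by move=> ha hb; rewrite mulrA ha -mulrA hb mulrA. Qed.
Lemma cZ (s : F) a : Z * a = a * Z -> Z * (s *: a) = (s *: a) * Z.
Proof. by move=> ha; rewrite -scalerAr -scalerAl ha. Qed.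
Lemma c1 : Z * 1 = 1 * Z.
Proof. by rewrite mulr1 mul1r. Qed.
End Closure.

Theorem lemma11p3 (F : fieldType) (q : F)
    (hq0 : q != 0) (hroot : forall n : nat, (0 < n)%N -> q ^+ n != 1)
    (A : algType F) (Wm Wp G Gt : nat -> A) :
  Oq_relations q Wm Wp G Gt ->
  forall x : A, gen_by Wm Wp G Gt x ->
    (Gt 0%N + q *: Bdelta q Wm Wp) * x = x * (Gt 0%N + q *: Bdelta q Wm Wp).
Proof.
move=> HO.
have [H1 [H2 [H3 [H4 [H5 [H6 [H7 [H8 [H9 [H10 [H11 [H12 [H13 [H14 [H15 H16]]]]]]]]]]]]]]] := HO.
have hqq : q * q + 1 != 0.
  apply/eqP => h.
  have e : q * q = -1 by rewrite -(addrK 1 (q * q)) h sub0r.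
  have := hroot 4%N isT.
  have -> : q ^+ 4 = (q * q) * (q * q) by rewrite !exprS expr0 mulr1 !mulrA.
  by rewrite e mulrNN mulr1 eqxx.
have hc : q + q^-1 != 0.
  apply: contra hqq => /eqP h; apply/eqP.
  have -> : q * q + 1 = q * (q + q^-1) by rewrite mulrDr mulfV.
  by rewrite h mulr0.
set c := (q + q^-1)^-1.
set r := rho q.
set Z := Gt 0%N + q *: Bdelta q Wm Wp.
have cWm : forall k, Z * Wm k = Wm k * Z.
  move=> k; apply/eqP; rewrite -subr_eq0; apply/eqP.
  have key : Z * Wm k - Wm k * Z =
    -1 *: (comm (Wm k) (Gt 0%N) + comm (Gt k) (Wm 0%N))
    + q^-1 *: (Wp 0%N * comm (Wm 0%N) (Wm k))
    + q *: (comm (Wm k) (Wm 0%N) * Wp 0%N)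
    - q^-1 *: ((comm (Wm k) (Wp 0%N) - c *: (Gt k - G k)) * Wm 0%N)
    + q *: (Wm 0%N * (comm (Wm k) (Wp 0%N) - c *: (Gt k - G k)))
    - c *: (qcomm q (Wm 0%N) (G k) - qcomm q (Gt k) (Wm 0%N)).
    rewrite /Z /c.
    lc_solve [:: Wp 0%N * Wm 0%N * Wm k; Wp 0%N * Wm k * Wm 0%N; Wm k * Wm 0%N * Wp 0%N;
               Wm 0%N * Wm k * Wp 0%N; Wm k * Wp 0%N * Wm 0%N; Wm 0%N * Wp 0%N * Wm k;
               Gt 0%N * Wm k; Wm k * Gt 0%N; Gt k * Wm 0%N; Wm 0%N * Gt k;
               G k * Wm 0%N; Wm 0%N * G k] fld.
  rewrite (H11 k 0%N) (H7 0%N k) (H7 k 0%N) H2 subrr H3 H4 subrr in key.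
  by rewrite key !(mulr0, mul0r, scaler0, addr0, subr0).
have cWp : forall k, Z * Wp k = Wp k * Z.
  move=> k; apply/eqP; rewrite -subr_eq0; apply/eqP.
  have key : Z * Wp k - Wp k * Z =
    -1 *: (comm (Wp k) (Gt 0%N) + comm (Gt k) (Wp 0%N))
    - q^-1 *: (comm (Wp k) (Wp 0%N) * Wm 0%N)
    - q *: (Wm 0%N * comm (Wp 0%N) (Wp k))
    + q^-1 *: (Wp 0%N * (comm (Wm 0%N) (Wp k) - c *: (Gt k - G k)))
    - q *: ((comm (Wm 0%N) (Wp k) - c *: (Gt k - G k)) * Wp 0%N)
    + c *: (qcomm q (G k) (Wp 0%N) - qcomm q (Wp 0%N) (Gt k)).
    rewrite /Z /c.
    lc_solve [:: Wp 0%N * Wm 0%N * Wp k; Wp 0%N * Wp k * Wm 0%N; Wp k * Wp 0%N * Wm 0%N;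
               Wm 0%N * Wp 0%N * Wp k; Wm 0%N * Wp k * Wp 0%N; Wp k * Wm 0%N * Wp 0%N;
               Gt 0%N * Wp k; Wp k * Gt 0%N; Gt k * Wp 0%N; Wp 0%N * Gt k;
               G k * Wp 0%N; Wp 0%N * G k] fld.
  rewrite (H13 k 0%N) (H8 0%N k) (H8 k 0%N) H1 subrr H5 H6 subrr in key.
  by rewrite key !(mulr0, mul0r, scaler0, addr0, subr0).
have cGt : forall k, Z * Gt k = Gt k * Z.
  move=> k; apply/eqP; rewrite -subr_eq0; apply/eqP.
  have key : Z * Gt k - Gt k * Z =
    comm (Gt 0%N) (Gt k)
    - Wp 0%N * (qcomm q (Gt k) (Wm 0%N) - (r *: Wm k.+1 - r *: Wp k))
    + (qcomm q (Wp 0%N) (Gt k) - (r *: Wp k.+1 - r *: Wm k)) * Wm 0%N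
    - Wm 0%N * (qcomm q (Wp 0%N) (Gt k) - (r *: Wp k.+1 - r *: Wm k))
    + (qcomm q (Gt k) (Wm 0%N) - (r *: Wm k.+1 - r *: Wp k)) * Wp 0%N
    + r *: (comm (Wm k.+1) (Wp 0%N) + comm (Wp k.+1) (Wm 0%N))
    - r *: comm (Wp k) (Wp 0%N)
    + r *: comm (Wm 0%N) (Wm k).
    rewrite /Z.
    lc_solve [:: Wp 0%N * Gt k * Wm 0%N; Wp 0%N * Wm 0%N * Gt k; Gt k * Wp 0%N * Wm 0%N;
               Wm 0%N * Wp 0%N * Gt k; Wm 0%N * Gt k * Wp 0%N; Gt k * Wm 0%N * Wp 0%N;
               Gt 0%N * Gt k; Gt k * Gt 0%N;
               Wp 0%N * Wm k.+1; Wm k.+1 * Wp 0%N; Wp 0%N * Wp k; Wp k * Wp 0%N;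
               Wp k.+1 * Wm 0%N; Wm 0%N * Wp k.+1; Wm 0%N * Wm k; Wm k * Wm 0%N] fld.
  rewrite (H15 0%N k) H4 H6 (H9 k.+1 0%N) (H8 k 0%N) (H7 0%N k) !subrr in key.
  by rewrite key !(mulr0, mul0r, scaler0, addr0, subr0).
have cG : forall k, Z * G k = G k * Z.
  move=> k.
  have -> : G k = Gt k - (q + q^-1) *: comm (Wm 0%N) (Wp k).
    by rewrite H1 scalerA mulfV // scale1r opprB addrC subrK.
  apply: cB; first exact: cGt.
  apply: cZ; rewrite /comm; apply: cB; apply: cM; by [apply: cWm | apply: cWp].
move=> x; elim=> {x} [k|k|k|k| |s x _ hx|x y _ hx _ hy|x y _ hx _ hy].
- exact: cWm.
- exact: cWp.
- exact: cG.
- exact: cGt.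
- exact: c1.
- exact: cZ.
- exact: cD.
- exact: cM.
Qed.
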